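(* Every $W_1$-module in category $\mathcal{J}_1$ is a polynomial module.
   Context: Take $n=1$. Let $\mathcal{F}(\mathbb{T}^1)$ be the commutative algebra with $\mathbb{C}$-basis $e_m=e^{2\pi i m x}$, $m\in\mathbb{Z}$, and $e_me_k=e_{m+k}$. Let $W_1$ be the Lie algebra with $\mathbb{C}$-basis $d(s)=\frac{1}{2\pi i}e^{2\pi i s x}\frac{d}{dx}$, $s\in\mathbb{Z}$, and bracket $[d(s),d(m)]=(m-s)\,d(s+m)$. $W_1$ acts on $\mathcal{F}(\mathbb{T}^1)$ by derivations via $d(s)e_m=m\,e_{m+s}$. Category $\mathcal{J}_1$ consists of $W_1$-modules $J$ that are also $\mathcal{F}(\mathbb{T}^1)$-modules and satisfy: (J1) $d(0)$ acts diagonalizably on $J$; (J2) $J$ is a free $\mathcal{F}(\mathbb{T}^1)$-module of finite rank; (J3) $u(fw)=(uf)w+f(uw)$ for all $u\in W_1$, $f\in\mathcal{F}(\mathbb{T}^1)$, $w\in J$. A module $J$ in $\mathcal{J}_1$ is a polynomial module if there is a basis $v_1,\dots,v_k$ of $J$ over $\mathcal{F}(\mathbb{T}^1)$ such that $d(s)(e_m v_r)=\sum_{\ell=1}^k f_{r\ell}(s,m)\,e_{m+s}v_\ell$ for all $s,m\in\mathbb{Z}$, where each $f_{r\ell}(s,m)$ is a polynomial in $s$ and $m$. *)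

(* Defs.v *)
From HB Require Import structures.
From mathcomp Require Import all_boot all_order all_algebra.
From mathcomp Require Import complex.
From mathcomp Require Import reals Rstruct.
Set Implicit Arguments. Unset Strict Implicit. Unset Printing Implicit Defensive.
Import Order.TTheory GRing.Theory Num.Theory.
Local Open Scope ring_scope.

Notation CC := (complex Rdefinitions.R).

Section J1.
Variable V : lmodType CC.

(* E m : the action of the basis element e_m = exp(2 pi i m x) of F(T^1);
   D s : the action of the basis element d(s) of W_1.  Both algebras have
   the given C-bases, so their (C-linear) actions are determined by these. *)
Variables (E D : int -> V -> V).

Definition lin (f : V -> V) : Prop :=
  forall (a : CC) (x y : V), f (a *: x + y) = a *: f x + f y.

Definition is_Fmodule : Prop :=
  [/\ forall m, lin (E m),
      forall w, E 0 w = w &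
      forall m k w, E m (E k w) = E (m + k) w].

Definition is_W1module : Prop :=
  (forall s, lin (D s)) /\
  forall s m w, D s (D m w) - D m (D s w) = (m - s)%:~R *: D (s + m) w.

(* (J3) for u = d(s), f = e_m, using d(s) e_m = m e_(m+s). *)
Definition J3 : Prop :=
  forall s m w, D s (E m w) = m%:~R *: E (m + s) w + E m (D s w).

Definition J1 : Prop :=
  forall w : V, exists (n : nat) (lam : 'I_n -> CC) (u : 'I_n -> V),
    (forall i, D 0 (u i) = lam i *: u i) /\ w = \sum_(i < n) u i.

(* v_1..v_k is a basis of V over F(T^1): an element of F^k is a k-tuple of
   finite linear combinations of the e_m, encoded by a finite list S of
   exponents and coefficients c m r. *)
Definition F_comb (k : nat) (v : 'I_k -> V) (S : seq int)
    (c : int -> 'I_k -> CC) : V :=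
  \sum_(m <- S) \sum_(r < k) c m r *: E m (v r).

Definition F_basis (k : nat) (v : 'I_k -> V) : Prop :=
  (forall w : V, exists (S : seq int) (c : int -> 'I_k -> CC),
      w = F_comb v S c) /\
  (forall (S : seq int) (c : int -> 'I_k -> CC), uniq S ->
      F_comb v S c = 0 -> forall m r, m \in S -> c m r = 0).

Definition J2 : Prop := exists (k : nat) (v : 'I_k -> V), F_basis v.

Definition in_J1 : Prop := [/\ is_Fmodule, is_W1module, J1, J2 & J3].

(* Evaluation of a polynomial in two variables (s, m), represented as an
   element of C[s][m] = {poly {poly C}}: outer variable s, inner m. *)
Definition eval2 (p : {poly {poly CC}}) (s m : int) : CC :=
  (p.[(s%:~R)%:P]).[m%:~R].

Definition polynomial_module : Prop :=
  exists (k : nat) (v : 'I_k -> V), F_basis v /\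
    exists f : 'I_k -> 'I_k -> {poly {poly CC}},
      forall (s m : int) (r : 'I_k),
        D s (E m (v r)) = \sum_(l < k) eval2 (f r l) s m *: E (m + s) (v l).

End J1.

(* Main.v *)
Require Import Defs.
From mathcomp Require Import all_boot all_order all_algebra.
From mathcomp Require Import complex reals Rstruct.
From mathcomp Require Import ring lra zify.
From Stdlib Require Import Classical ClassicalEpsilon.
Set Implicit Arguments. Unset Strict Implicit. Unset Printing Implicit Defensive.
Import Order.TTheory GRing.Theory Num.Theory.
Local Open Scope ring_scope.
Section PartA.
Variable n : nat.
Implicit Types (g : int -> 'M[CC]_n).

Definition dlt g : int -> 'M[CC]_n := fun a => g (a + 1) - g a.
Definition DN (N : nat) g := iter N dlt g.

Lemma DN_S N g a : DN N.+1 g a = DN N g (a + 1) - DN N g a.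
Proof. by []. Qed.

Lemma newton g : forall (k : nat) a,
  g (a + k%:Z) = \sum_(j < k.+1) ('C(k, j))%:R *: DN j g a.
Proof.
move=> k; elim: k g => [|k IH] g a.
  by rewrite big_ord1 addr0 bin0 scale1r.
have -> : g (a + k.+1%:Z) = dlt g (a + k%:Z) + g (a + k%:Z).
  by rewrite /dlt -addn1 PoszD addrA subrK.
rewrite IH IH.
have hD : forall j, DN j (dlt g) a = DN j.+1 g a.
  by move=> j; rewrite /DN iterSr.
under eq_bigr do rewrite hD.
rewrite [in RHS]big_ord_recl bin0 scale1r.
under [in RHS]eq_bigr do rewrite lift0 /= binS natrD scalerDl.
rewrite big_split /= [in RHS]addrA [in RHS]addrC; congr (_ + _).
rewrite [in RHS]big_ord_recr /= bin_small // scale0r addr0.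
rewrite [in LHS]big_ord_recl bin0 scale1r.
by under [in LHS]eq_bigr do rewrite lift0 /=.
Qed.
Lemma ad_DN (H : 'M[CC]_n) g :
  (forall a, H *m g a - g a *m H = (a - 1)%:~R *: g a - a%:~R *: g (a - 1) + g 0) ->
  forall N a, H *m DN N g a - DN N g a *m H =
     (a + N%:Z - 1)%:~R *: DN N g a - a%:~R *: DN N g (a - 1) + (N == 0)%:R *: g 0.
Proof.
move=> hg; elim=> [|N IH] a.
  by rewrite /= hg addr0 scale1r.
rewrite !DN_S mulmxBr mulmxBl.
have e2 := IH (a + 1); have e1 := IH a.
rewrite (_ : a - 1 + 1 = a); last by rewrite subrK.
rewrite (_ : a + 1 - 1 = a) in e2; last by rewrite addrK.
move: e2 e1; set x2 := DN N g (a + 1); set x1 := DN N g a; set x0 := DN N g (a - 1).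
set A2 := H *m x2; set B2 := x2 *m H; set A1 := H *m x1; set B1 := x1 *m H.
move=> e2 e1.
have -> : A2 - A1 - (B2 - B1) = (A2 - B2) - (A1 - B1).
  apply/matrixP=> i j; rewrite !mxE; ring.
rewrite e2 e1; apply/matrixP=> i j; rewrite !mxE /=.
rewrite !(intrD, intrB, natz, intrN). ring.
Qed.
End PartA.
Lemma threshold (p : {poly CC}) : p != 0 ->
  exists B : nat, forall N : nat, (B <= N)%N -> ~~ root p N%:R.
Proof.
move=> p0; apply: NNPP => hn.
have hall : forall B : nat, exists N : nat, (B <= N)%N /\ root p N%:R.
  move=> B; apply: NNPP => hB; apply: hn; exists B => N hN.
  apply/negP => hr; apply: hB; by exists N.
have : forall j : nat, exists rs : seq nat,
    size rs = j /\ uniq rs /\ all (fun x : nat => root p x%:R) rs.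
  elim=> [|j [rs [hs [hu ha]]]]; first by exists [::].
  have [N [hN hr]] := hall (\max_(x <- rs) x).+1.
  exists (N :: rs); split; first by rewrite /= hs.
  split; last by rewrite /= hr.
  rewrite /= hu andbT; apply/negP => hin.
  have := @leq_bigmax_seq nat rs xpredT (fun x => x) N hin isT.
  by rewrite leqNgt hN.
move=> /(_ (size p)) [rs [hs [hu ha]]].
have := @max_poly_roots _ p [seq x%:R | x <- rs] p0.
rewrite size_map hs ltnn all_map ha => /(_ isT) H.
suff : false by [].
apply: H; rewrite map_inj_uniq // => x y /eqP; rewrite eqr_nat => /eqP //.
Qed.

Definition binp (j : nat) : {poly CC} :=
  \prod_(i < j) (('X - (i%:R)%:P) * ((i.+1)%:R^-1)%:P).

Lemma binpE j (m : nat) : (binp j).[m%:R] = ('C(m, j))%:R.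
Proof.
elim: j => [|j IH]; first by rewrite /binp big_ord0 hornerC bin0.
rewrite /binp big_ord_recr /= hornerM -/(binp j) IH hornerM hornerXsubC hornerC.
have h := mul_bin_left m j.
have hj : (j.+1)%:R != 0 :> CC by rewrite pnatr_eq0.
case: (leqP j m) => hjm.
  have : ((j.+1 * 'C(m, j.+1))%:R : CC) = ((m - j) * 'C(m, j))%:R by rewrite h.
  rewrite !natrM natrB // => e.
  rewrite -(mulKf hj ('C(m, j.+1))%:R) e; field; by rewrite nat1r.
by rewrite (bin_small hjm) (bin_small (ltn_trans hjm (ltnSn j))) !mul0r.
Qed.

Lemma sum_trunc (M : zmodType) (f : nat -> M) (K : nat) :
  (forall j, (K <= j)%N -> f j = 0) ->
  forall K', (K <= K')%N -> \sum_(j < K') f j = \sum_(j < K) f j.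
Proof.
move=> hf; elim=> [|K' IH] hK.
  by move: hK; rewrite leqn0 => /eqP ->.
case: (leqP K K') => h.
  by rewrite big_ord_recr /= hf // addr0 IH.
have -> : K = K'.+1 by apply/eqP; rewrite eqn_leq hK h.
by [].
Qed.

Lemma poly_int_eq0 (p : {poly CC}) (s0 : int) :
  (forall s : int, s0 <= s -> p.[s%:~R] = 0) -> p = 0.
Proof.
move=> h.
apply: (@roots_geq_poly_eq0 _ p [seq (s0 + i%:Z)%:~R | i <- iota 0 (size p)]).
- apply/allP => x /mapP [i _ ->]; apply/eqP/h; by rewrite lerDl.
- rewrite map_inj_uniq ?iota_uniq // => x y /intr_inj /addrI [].
  done.
- by rewrite size_map size_iota.
Qed.

Lemma polyQ (n : nat) (Q : int -> 'M[CC]_n) (lam : 'I_n -> CC) :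
  (forall m s : int, Q m *m Q s - Q s *m Q m =
     (m - s)%:~R *: Q (s + m) - m%:~R *: Q m + s%:~R *: Q s) ->
  (forall r l, Q 0 r l = if r == l then lam r else 0) ->
  (forall s r l, Q s r l != 0 -> lam r = lam l) ->
  exists q : 'I_n -> 'I_n -> {poly CC}, forall s r l, Q s r l = (q r l).[s%:~R].
Proof.
move=> hQ hQ0 hblk.
pose g := fun a : int => Q (a - 1).
pose H := Q (-1).
have hg : forall a, H *m g a - g a *m H =
    (a - 1)%:~R *: g a - a%:~R *: g (a - 1) + g 0.
  move=> a; rewrite /g /H hQ sub0r.
  apply/matrixP=> i j; rewrite !mxE !(intrD, intrB, intrN); ring.
have hadN := ad_DN hg.
have heig : forall N, (0 < N)%N ->
    H *m DN N g 0 - DN N g 0 *m H = (N.-1)%:R *: DN N g 0.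
  case=> // N _; rewrite hadN /= add0r -[N.+1]addn1 PoszD addrK.
  apply/matrixP=> i j; rewrite !mxE /=; ring.
pose M := lin_mx (mulmx H) - lin_mx (mulmxr H).
have hM : forall X, mxvec X *m M = mxvec (H *m X - X *m H).
  by move=> X; rewrite mulmxBr !mul_vec_lin linearB.
have cp0 : char_poly M != 0 by apply: monic_neq0; apply: char_poly_monic.
have [B hB] := threshold cp0.
have hz : forall N, (B.+1 <= N)%N -> DN N g 0 = 0.
  move=> N hN; apply/eqP; apply: contraT => hX.
  have : eigenvalue M (N.-1)%:R.
    apply/eigenvalueP; exists (mxvec (DN N g 0)).
      by rewrite hM heig ?(leq_trans _ hN) // linearZ.
    by rewrite mxvec_eq0.
  rewrite eigenvalue_root_char => hr.
  have := hB N.-1; rewrite hr; apply => //.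
  by rewrite -ltnS (leq_trans hN) // leqSpred.
pose N0 := B.+1.
pose q := fun r l : 'I_n => \sum_(j < N0) (DN j g 0 r l) *: (binp j \Po ('X + 1)).
have hpos : forall (k : nat) r l, Q (k%:Z - 1) r l = (q r l).[(k%:Z - 1)%:~R].
  move=> k r l.
  have := newton g k 0; rewrite add0r /g => ->.
  rewrite /q horner_sum summxE.
  under [RHS]eq_bigr do rewrite hornerZ horner_comp hornerD hornerX hornerC
      intrB subrK binpE.
  rewrite (eq_bigr (fun j : 'I_k.+1 => ('C(k, j))%:R * DN j g 0 r l)); last first.
    by move=> j _; rewrite mxE.
  pose f := fun j : nat => ('C(k, j))%:R * DN j g 0 r l.
  have hf : forall j, (N0 <= j)%N -> f j = 0.
    by move=> j hj; rewrite /f hz // mxE mulr0.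
  have hf2 : forall j, (k.+1 <= j)%N -> f j = 0.
    by move=> j hj; rewrite /f bin_small // mul0r.
  transitivity (\sum_(j < k.+1) f j) => //.
  rewrite -(sum_trunc hf2 (leq_addr N0 k.+1)) (sum_trunc hf (leq_addl _ _)).
  by apply: eq_bigr => j _; rewrite /f mulrC.
clearbody q.
have hge : forall s r l, -1 <= s -> Q s r l = (q r l).[s%:~R].
  move=> s r l hs.
  have -> : s = (absz (s + 1))%:Z - 1 by rewrite abszE ger0_norm ?addrK //; lia.
  exact: hpos.
exists q => s r l.
case: (lerP (-1) s) => hs; first exact: hge.
pose R := \sum_i (Q s r i *: q i l - Q s i l *: q r i) -
   ((s%:~R%:P - 'X) * (q r l \Po ('X + s%:~R%:P)) - (s%:~R * Q s r l)%:P + 'X * q r l).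
have hR : R = 0.
  apply: (@poly_int_eq0 R (1 - s)) => t ht.
  have ht1 : -1 <= t by lia.
  have htm : -1 <= t + s by lia.
  have e := congr1 (fun M : 'M_n => M r l) (hQ s t).
  rewrite /= !mxE in e.
  rewrite /R !(hornerE, horner_sum, horner_comp) -intrD -!hge //.
  under eq_bigr do rewrite !(hornerE) -!hge //.
  rewrite sumrB; under [X in _ - X - _]eq_bigr do rewrite mulrC.
  by rewrite e intrB subrr.
have := congr1 (fun p => p.[0]) hR.
rewrite /R !(hornerE, horner_sum, horner_comp) subr0.
have h0 : forall i j, (q i j).[0] = if i == j then lam i else 0.
  by move=> i j; rewrite -hQ0 (hge 0) //.
under eq_bigr do rewrite !hornerE !h0.
rewrite sumrB (bigD1 l) //= eqxx big1 ?addr0; last first.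
  by move=> i /negbTE ->; rewrite mulr0.
rewrite (bigD1 r) //= eqxx big1 ?addr0; last first.
  by move=> i; rewrite eq_sym => /negbTE ->; rewrite mulr0.
have -> : Q s r l * lam l - Q s r l * lam r = 0.
  case: (eqVneq (Q s r l) 0) => [->|/hblk ->]; first by rewrite !mul0r subrr.
  by rewrite subrr.
have hs0 : s%:~R != 0 :> CC by rewrite intr_eq0; apply/eqP => e0; move: hs; rewrite e0.
rewrite sub0r => /eqP; rewrite oppr_eq0 subr_eq0 => /eqP /(mulfI hs0) -> //.
Qed.

Section PartB.
Variable V : lmodType CC.
Variables E D : int -> V -> V.

Section LinF.
Variable f : V -> V.
Hypothesis hf : lin f.
Lemma lin0 : f 0 = 0.
Proof.
have := hf 1 0 0; rewrite !scale1r addr0 => h.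
by apply: (addrI (f 0)); rewrite addr0 -h.
Qed.
Lemma linD x y : f (x + y) = f x + f y.
Proof. by have := hf 1 x y; rewrite !scale1r. Qed.
Lemma linZ a x : f (a *: x) = a *: f x.
Proof. by have := hf a x 0; rewrite !addr0 lin0 addr0. Qed.
Lemma linN x : f (- x) = - f x.
Proof. by rewrite -scaleN1r linZ scaleN1r. Qed.
Lemma linB x y : f (x - y) = f x - f y.
Proof. by rewrite linD linN. Qed.
Lemma linS (T : Type) (s : seq T) (P : pred T) (F : T -> V) :
  f (\sum_(i <- s | P i) F i) = \sum_(i <- s | P i) f (F i).
Proof. exact: (big_morph f linD lin0). Qed.
End LinF.

Lemma lin_iter (f : V -> V) n : lin f -> lin (iter n f).
Proof.
move=> hf; elim: n => [|n IH] a x y //=.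
by rewrite IH linD // linZ.
Qed.

Definition wt (mu : CC) (w : V) := D 0 w = mu *: w.

Hypothesis hD0 : lin (D 0).

Lemma wt0 mu : wt mu 0.
Proof. by rewrite /wt lin0 // scaler0. Qed.

Definition pD (P : {poly CC}) (w : V) := \sum_(i < size P) P`_i *: iter i (D 0) w.

Lemma pD_wt P mu w : wt mu w -> pD P w = P.[mu] *: w.
Proof.
move=> hw; have hi : forall i, iter i (D 0) w = mu ^+ i *: w.
  elim=> [|i IH] /=; first by rewrite scale1r.
  by rewrite IH linZ // hw scalerA exprSr.
rewrite /pD horner_coef scaler_suml; apply: eq_bigr => i _.
by rewrite hi scalerA.
Qed.

Lemma pD_add P x y : pD P (x + y) = pD P x + pD P y.
Proof.
rewrite /pD -big_split /=; apply: eq_bigr => i _.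
by rewrite linD ?scalerDr //; apply: lin_iter.
Qed.

Lemma pD_zero P : pD P 0 = 0.
Proof.
rewrite /pD big1 // => i _; by rewrite lin0 ?scaler0 //; apply: lin_iter.
Qed.

Lemma wt_proj (T : eqType) (s : seq T) (x : T -> V) (mu : T -> CC) (lam : CC) (y : V) :
  (forall i, wt (mu i) (x i)) -> wt lam y ->
  y = \sum_(i <- s) x i -> y = \sum_(i <- s | mu i == lam) x i.
Proof.
move=> hx hy hys.
pose P := \prod_(nu <- [seq mu i | i <- s & mu i != lam]) ('X - nu%:P).
have hPl : P.[lam] != 0.
  have := root_prod_XsubC [seq mu i | i <- s & mu i != lam] lam.
  rewrite -/P /root => ->; apply/negP; case/mapP => i.
  by rewrite mem_filter => /andP [/negP hne _] e; apply: hne; rewrite e.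
have e1 : pD P y = P.[lam] *: y by apply: pD_wt.
have e2 : pD P y = \sum_(i <- s) P.[mu i] *: x i.
  rewrite hys (big_morph (pD P) (@pD_add P) (pD_zero P)).
  by apply: eq_bigr => i _; apply: pD_wt.
have e3 : \sum_(i <- s) P.[mu i] *: x i = P.[lam] *: \sum_(i <- s | mu i == lam) x i.
  rewrite scaler_sumr (bigID (fun i => mu i == lam)) /= [X in _ + X]big_seq_cond [X in _ + X]big1 ?addr0.
    by apply: eq_bigr => i /eqP ->.
  move=> i /andP [his hne].
  have : root P (mu i).
    rewrite root_prod_XsubC; apply/mapP; exists i => //.
    by rewrite mem_filter hne.
  by move/rootP ->; rewrite scale0r.
by apply: (scalerI hPl); rewrite -e1 e2 e3.
Qed.

Lemma part (T U : eqType) (ts : seq T) (f : T -> U) (F : T -> V) :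
  \sum_(t <- ts) F t = \sum_(m <- undup (map f ts)) \sum_(t <- ts | f t == m) F t.
Proof.
under [RHS]eq_bigr do rewrite big_mkcond /=.
rewrite exchange_big /=; apply: eq_big_seq => t ht.
rewrite -big_mkcond -big_filter.
have -> : [seq m <- undup [seq f i | i <- ts] | f t == m] = [:: f t].
  rewrite -(filter_pred1_uniq (undup_uniq [seq f i | i <- ts])).
    by apply: eq_filter => m /=; rewrite eq_sym.
  by rewrite mem_undup; apply: map_f.
by rewrite big_seq1.
Qed.

Lemma collect (T : Type) (ts : seq T) (idx : T -> nat) (a : T -> CC) (b : nat -> V) N :
  all (fun t => idx t < N)%N ts ->
  \sum_(t <- ts) a t *: b (idx t) = \sum_(i < N) (\sum_(t <- ts | idx t == i) a t) *: b i.
Proof.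
elim: ts => [|t ts IH] /=.
  by rewrite big_nil big1 // => i _; rewrite big_nil scale0r.
case/andP => ht hts; rewrite big_cons IH //.
under [RHS]eq_bigr do rewrite big_cons.
rewrite [in RHS](bigD1 (Ordinal ht)) //= eqxx scalerDl -addrA; congr (_ + _).
rewrite [in LHS](bigD1 (Ordinal ht)) //=; congr (_ + _).
apply: eq_bigr => i hi.
have -> : (idx t == i) = false.
  by apply/negbTE; apply: contra hi => /eqP e; apply/eqP/val_inj; rewrite /= e.
by [].
Qed.

Hypothesis hE : forall m, lin (E m).
Hypothesis hE0 : forall w, E 0 w = w.
Hypothesis hEE : forall m k w, E m (E k w) = E (m + k) w.
Hypothesis hDl : forall s, lin (D s).
Hypothesis hDD : forall s m w, D s (D m w) - D m (D s w) = (m - s)%:~R *: D (s + m) w.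
Hypothesis hJ3 : forall s m w, D s (E m w) = m%:~R *: E (m + s) w + E m (D s w).

Lemma wtE mu w m : wt mu w -> wt (mu + m%:~R) (E m w).
Proof.
by rewrite /wt => hw; rewrite hJ3 addr0 hw linZ // scalerDl addrC.
Qed.

Lemma wtD mu w s : wt mu w -> wt (mu + s%:~R) (D s w).
Proof.
rewrite /wt => hw; have := hDD 0 s w; rewrite hw linZ // subr0 add0r => e.
by rewrite scalerDl -e addrC subrK.
Qed.

Lemma EK m w : E m (E (- m) w) = w.
Proof. by rewrite hEE subrr hE0. Qed.
Lemma EKV m w : E (- m) (E m w) = w.
Proof. by rewrite hEE addNr hE0. Qed.

Definition bv (B : seq (CC * V)) i := (nth (0, 0) B i).2.
Definition bl (B : seq (CC * V)) i := (nth (0, 0) B i).1.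

Definition indepB B := forall c : nat -> CC,
  \sum_(i < size B) c i *: bv B i = 0 -> forall i, (i < size B)%N -> c i = 0.
Definition repsB B := forall i j, (i < size B)%N -> (j < size B)%N ->
  forall z : int, bl B i = bl B j + z%:~R -> bl B i = bl B j.
Definition wtB B := forall i, wt (bl B i) (bv B i).
Definition CspanB B w := exists c : nat -> CC, w = \sum_(i < size B) c i *: bv B i.
Definition AspanB B w := exists ts : seq (int * nat * CC),
  all (fun t => t.1.2 < size B)%N ts /\ w = \sum_(t <- ts) t.2 *: E t.1.1 (bv B t.1.2).
Definition invB B := [/\ indepB B, repsB B & wtB B].

Lemma bv_cat B X i : (i < size B)%N -> bv (B ++ X) i = bv B i.
Proof. by move=> h; rewrite /bv nth_cat h. Qed.
Lemma bl_cat B X i : (i < size B)%N -> bl (B ++ X) i = bl B i.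
Proof. by move=> h; rewrite /bl nth_cat h. Qed.

Lemma Aspan_mono B X w : AspanB B w -> AspanB (B ++ X) w.
Proof.
case=> ts [hall ->]; exists ts; split.
  by apply/allP => t /(allP hall) h; rewrite size_cat (leq_trans h) // leq_addr.
by apply: eq_big_seq => t /(allP hall) h; rewrite bv_cat.
Qed.

Lemma Aspan0 B : AspanB B 0.
Proof. by exists [::]; rewrite big_nil. Qed.

Lemma AspanD B x y : AspanB B x -> AspanB B y -> AspanB B (x + y).
Proof.
case=> t1 [h1 ->] [t2 [h2 ->]]; exists (t1 ++ t2).
by rewrite all_cat h1 h2 big_cat.
Qed.

Lemma AspanZ B a x : AspanB B x -> AspanB B (a *: x).
Proof.
case=> ts [h ->]; exists [seq (t.1, a * t.2) | t <- ts]; split.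
  by rewrite all_map.
by rewrite big_map scaler_sumr; apply: eq_bigr => t _; rewrite scalerA.
Qed.

Lemma AspanE B m x : AspanB B x -> AspanB B (E m x).
Proof.
case=> ts [h ->]; exists [seq (m + t.1.1, t.1.2, t.2) | t <- ts]; split.
  by rewrite all_map.
rewrite big_map linS //; apply: eq_bigr => t _; by rewrite linZ // hEE.
Qed.

Lemma AspanS B (T : Type) (s : seq T) (F : T -> V) :
  (forall i, AspanB B (F i)) -> AspanB B (\sum_(i <- s) F i).
Proof.
move=> h; elim: s => [|i s IH]; first by rewrite big_nil; apply: Aspan0.
by rewrite big_cons; apply: AspanD.
Qed.

Lemma indep_ext B nu w : indepB B -> ~ CspanB B w -> indepB (B ++ [:: (nu, w)]).
Proof.
move=> hB hw c.
rewrite size_cat addn1 big_ord_recr /=.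
have hbv : bv (B ++ [:: (nu, w)]) (size B) = w by rewrite /bv nth_cat ltnn subnn.
rewrite hbv.
under eq_bigr => i _ do rewrite bv_cat //.
move=> hsum.
have hc : c (size B) = 0.
  apply: NNPP => hne; apply: hw.
  exists (fun i => - (c (size B))^-1 * c i).
  apply: (scalerI (a := c (size B))); first by apply/eqP.
  rewrite scaler_sumr.
  have -> : c (size B) *: w = - \sum_(i < size B) c i *: bv B i.
    by apply/eqP; rewrite -addr_eq0 addrC hsum.
  rewrite -sumrN; apply: eq_bigr => i _.
  by rewrite !scalerA mulrA mulrN mulfV ?mulN1r ?scaleNr //; apply/eqP.
move: hsum; rewrite hc scale0r addr0 => hsum i.
rewrite ltnS leq_eqVlt => /orP [/eqP -> // | hi].
exact: hB hsum i hi.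
Qed.


Lemma step B mu w : invB B -> wt mu w -> exists X, invB (B ++ X) /\ AspanB (B ++ X) w.
Proof.
case=> hind hrep hwt hw.
have [nu [n [hnu hrel]]] : exists nu (n : int), mu = nu + n%:~R /\
   forall j, (j < size B)%N -> forall z : int,
     (nu = bl B j + z%:~R -> nu = bl B j) /\ (bl B j = nu + z%:~R -> bl B j = nu).
  case: (classic (exists j, (j < size B)%N /\ exists z : int, mu = bl B j + z%:~R)).
    case=> j0 [hj0 [z0 e0]]; exists (bl B j0), z0; split => // j hj z; split.
      by move=> e; apply: (hrep j0 j hj0 hj z e).
    by move=> e; apply: (hrep j j0 hj hj0 z e).
  move=> hno; exists mu, 0; split; first by rewrite mulr0z addr0.
  move=> j hj z; split => e; exfalso; apply: hno.
    by exists j; split => //; exists z.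
  by exists j; split => //; exists (-z); rewrite e intrN addrK.
pose w' := E (-n) w.
have hw' : wt nu w'.
  have := wtE (-n) hw; by rewrite hnu intrN addrK.
have hww : w = E n w' by rewrite /w' EK.
case: (classic (CspanB B w')).
  case=> c hc; exists [::]; rewrite cats0; split => //.
  exists [seq (n, nat_of_ord i, c i) | i <- index_enum 'I_(size B)]; split.
    by rewrite all_map; apply/allP => i _ /=.
  by rewrite big_map hww hc linS //; apply: eq_bigr => i _; rewrite linZ.
move=> hno; exists [:: (nu, w')].
have hbl : bl (B ++ [:: (nu, w')]) (size B) = nu by rewrite /bl nth_cat ltnn subnn.
have hbv : bv (B ++ [:: (nu, w')]) (size B) = w' by rewrite /bv nth_cat ltnn subnn.
split; first split.
- exact: indep_ext.
- move=> i j; rewrite size_cat addn1 !ltnS => hi hj.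
  move: hi; rewrite leq_eqVlt; case/orP => [/eqP -> | hi];
  move: hj; rewrite leq_eqVlt; case/orP => [/eqP -> | hj] z //.
  + by rewrite hbl bl_cat //; move/(hrel j hj z).1.
  + by rewrite hbl bl_cat //; move/(hrel i hi z).2.
  + by rewrite !bl_cat //; apply: hrep.
- move=> i; rewrite /bl /bv nth_cat; case: ltnP => h; first exact: hwt.
  case: (i - size B)%N => [|k] /=; first exact: hw'.
  rewrite nth_nil; exact: wt0.
exists [:: (n, size B, 1)]; split.
  by rewrite /= size_cat addn1 ltnSn.
by rewrite big_seq1 /= scale1r hbv.
Qed.

Lemma gather_w (ws : seq (CC * V)) B : invB B -> (forall p, p \in ws -> wt p.1 p.2) ->
  exists X, invB (B ++ X) /\ forall p, p \in ws -> AspanB (B ++ X) p.2.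
Proof.
elim: ws B => [|p ws IH] B hB hws.
  by exists [::]; rewrite cats0.
have [X1 [h1 a1]] := step hB (hws p (mem_head _ _)).
have [X2 [h2 a2]] := IH (B ++ X1) h1 (fun q hq => hws q (mem_behead (s := p :: ws) hq)).
exists (X1 ++ X2); rewrite catA; split => // q; rewrite inE => /orP [/eqP -> | hq].
  exact: Aspan_mono.
exact: a2.
Qed.

Hypothesis hJ1 : J1 D.

Lemma gather_v (xs : seq V) B : invB B ->
  exists X, invB (B ++ X) /\ forall x, x \in xs -> AspanB (B ++ X) x.
Proof.
elim: xs B => [|x xs IH] B hB.
  by exists [::]; rewrite cats0.
have [n [lam [u [hu hx]]]] := hJ1 x.
have hws : forall p, p \in [seq (lam i, u i) | i <- enum 'I_n] -> wt p.1 p.2.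
  by move=> p /mapP [i _ ->]; apply: hu.
have [X1 [h1 a1]] := @gather_w [seq (lam i, u i) | i <- enum 'I_n] B hB hws.
have ax : AspanB (B ++ X1) x.
  rewrite hx; apply: AspanS => i.
  by apply: (a1 (lam i, u i)); apply: map_f; rewrite mem_enum.
have [X2 [h2 a2]] := IH (B ++ X1) h1.
exists (X1 ++ X2); rewrite catA; split => // y; rewrite inE => /orP [/eqP -> | hy].
  exact: Aspan_mono.
exact: a2.
Qed.


Lemma wtZ mu a w : wt mu w -> wt mu (a *: w).
Proof. by rewrite /wt => hw; rewrite linZ // hw !scalerA mulrC. Qed.

Hypothesis hJ2 : J2 E.

Lemma main_basis : exists X, invB X /\ forall w, AspanB X w.
Proof.
have [k [v [hsp _]]] := hJ2.
have hinv0 : invB [::].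
  split.
  - by move=> c _ i.
  - by move=> i.
  - by move=> i; rewrite /bl /bv nth_nil; apply: wt0.
have [X [hX ax]] := gather_v [seq v r | r <- enum 'I_k] hinv0.
exists X; split => // w; have [S [c ->]] := hsp w.
rewrite /F_comb; apply: AspanS => m; apply: AspanS => r.
apply: AspanZ; apply: AspanE; apply: ax; apply: map_f; by rewrite mem_enum.
Qed.

Lemma Aspan_Fcomb X w : AspanB X w ->
  exists S c, w = F_comb E (fun i : 'I_(size X) => bv X i) S c.
Proof.
case=> ts [hall ->].
exists (undup (map (fun t => t.1.1) ts)),
  (fun m (i : 'I_(size X)) => \sum_(t <- ts | (t.1.1 == m) && (t.1.2 == i)) t.2).
rewrite (part ts (fun t => t.1.1)) /F_comb; apply: eq_bigr => m _.
rewrite -big_filter.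
rewrite (eq_big_seq (fun t => t.2 *: E m (bv X t.1.2))); last first.
  by move=> t; rewrite mem_filter => /andP [/eqP -> _].
rewrite (@collect _ _ (fun t => t.1.2) (fun t => t.2) (fun i => E m (bv X i)) (size X)).
  by apply: eq_bigr => i _; rewrite big_filter_cond.
apply/allP => t; rewrite mem_filter => /andP [_ ht]; exact: (allP hall).
Qed.


Section Final.
Variable X : seq (CC * V).
Hypothesis hX : invB X.
Hypothesis hsp : forall w, AspanB X w.
Local Notation N := (size X).
Definition u (i : 'I_N) := bv X i.
Definition lam (i : 'I_N) := bl X i.

Lemma indepI (c : 'I_N -> CC) : \sum_i c i *: u i = 0 -> forall i, c i = 0.
Proof.
case: hX => hind _ _ h i.
pose c' := fun j : nat => if insub j is Some k then c k else 0.
have e : forall k : 'I_N, c' k = c k by move=> k; rewrite /c' valK.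
have := hind c' _ i (ltn_ord i); rewrite e; apply.
by rewrite -[X in _ = X]h; apply: eq_bigr => k _; rewrite e.
Qed.

Lemma repsI (i j : 'I_N) (z : int) : lam i = lam j + z%:~R -> lam i = lam j /\ z = 0.
Proof.
rewrite /lam; case: hX => _ hrep _ e.
have e2 := hrep i j (ltn_ord i) (ltn_ord j) z e.
split => //; move: e; rewrite -e2 -{1}[bl X i]addr0 => /addrI /esym /eqP.
by rewrite intr_eq0 => /eqP.
Qed.

Lemma coeffs s (r : 'I_N) : exists c : 'I_N -> CC, D s (u r) = E s (\sum_l c l *: u l).
Proof.
case: hX => _ _ hwt.
pose y := E (- s) (D s (u r)).
have hy : wt (lam r) y.
  have := wtE (- s) (wtD s (hwt r)); by rewrite intrN addrK.
have [ts [hall hts]] := hsp y.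
have e := @wt_proj _ ts (fun t => t.2 *: E t.1.1 (bv X t.1.2))
  (fun t => bl X t.1.2 + t.1.1%:~R) (lam r) y
  (fun t => wtZ t.2 (wtE t.1.1 (hwt t.1.2))) hy hts.
rewrite big_seq_cond in e.
rewrite (eq_bigr (fun t => t.2 *: bv X t.1.2)) in e; last first.
  move=> t /andP [ht /eqP hmu].
  have hb := allP hall t ht.
  have [_ ->] := repsI (i := r) (j := Ordinal hb) (esym hmu).
  by rewrite hE0.
rewrite -big_filter in e.
rewrite (@collect _ _ (fun t => t.1.2) (fun t => t.2) (fun i => bv X i) N) in e; last first.
  apply/allP => t; rewrite mem_filter => /andP [/andP [ht _] _]; exact: (allP hall).
eexists; rewrite -[D s (u r)](EK s) -/y e; reflexivity.
Qed.

Definition Qm (s : int) : 'M[CC]_N :=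
  \matrix_(r, l) (proj1_sig (constructive_indefinite_description _ (coeffs s r)) l).

Lemma hQ s r : D s (u r) = E s (\sum_l Qm s r l *: u l).
Proof.
rewrite /Qm; under eq_bigr do rewrite mxE.
exact: (proj2_sig (constructive_indefinite_description _ (coeffs s r))).
Qed.

Definition Gam (M : 'M[CC]_N) r := \sum_l M r l *: u l.

Lemma GamD A B r : Gam (A + B) r = Gam A r + Gam B r.
Proof. by rewrite /Gam -big_split; apply: eq_bigr => l _; rewrite mxE scalerDl. Qed.
Lemma GamB A B r : Gam (A - B) r = Gam A r - Gam B r.
Proof. by rewrite /Gam -sumrB; apply: eq_bigr => l _; rewrite !mxE scalerBl. Qed.
Lemma GamZ a A r : Gam (a *: A) r = a *: Gam A r.
Proof. by rewrite /Gam scaler_sumr; apply: eq_bigr => l _; rewrite mxE scalerA. Qed.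

Lemma GamDs M s r : D s (Gam M r) = E s (Gam (M *m Qm s) r).
Proof.
rewrite /Gam linS //.
under eq_bigr do rewrite linZ // hQ -linZ //.
rewrite -linS //; congr (E s _).
under eq_bigr do rewrite scaler_sumr.
rewrite exchange_big /=; apply: eq_bigr => j _.
rewrite mxE scaler_suml; apply: eq_bigr => l _; by rewrite scalerA.
Qed.

Lemma Gam0 M r : Gam M r = 0 -> forall l, M r l = 0.
Proof. exact: indepI. Qed.

Lemma Qcomm m s : Qm m *m Qm s - Qm s *m Qm m =
  (m - s)%:~R *: Qm (s + m) - m%:~R *: Qm m + s%:~R *: Qm s.
Proof.
have k1 : forall a b r, D a (D b (u r)) =
    E (b + a) (Gam (b%:~R *: Qm b + Qm b *m Qm a) r).
  move=> a b r; rewrite hQ -/(Gam _ r) hJ3 GamDs hEE GamD GamZ linD // linZ //.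
have Z : forall r, Gam (m%:~R *: Qm m + Qm m *m Qm s - (s%:~R *: Qm s + Qm s *m Qm m)
     - (m - s)%:~R *: Qm (s + m)) r = 0.
  move=> r; have e := hDD s m (u r).
  rewrite k1 k1 hQ -/(Gam _ r) [m + s]addrC in e.
  rewrite !GamB GamZ.
  set L := (X in X = 0).
  have h0 : E (s + m) L = 0 by rewrite /L linB // linB // linZ // -e subrr.
  by rewrite -[L](EKV (s + m)) h0 lin0.
apply/matrixP => r l; have := Gam0 (Z r) l; rewrite !mxE => h.
apply/eqP; rewrite -subr_eq0; apply/eqP; rewrite -[X in _ = X]h; ring.
Qed.

Lemma Q0 r l : Qm 0 r l = if r == l then lam r else 0.
Proof.
case: hX => _ _ hwt.
pose L : 'M[CC]_N := \matrix_(i, j) (if i == j then lam i else 0).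
have hL : Gam L r = lam r *: u r.
  rewrite /Gam (bigD1 r) //= mxE eqxx big1 ?addr0 // => j hj.
  by rewrite mxE eq_sym (negbTE hj) scale0r.
have : Gam (Qm 0 - L) r = 0.
  rewrite GamB hL -/(Gam _ r).
  have := hQ 0 r; rewrite hE0 -/(Gam _ r) => <-.
  by rewrite (hwt r) subrr.
move/Gam0 => /(_ l); rewrite !mxE => /eqP; rewrite subr_eq0 => /eqP ->.
by [].
Qed.

Lemma Qblk s r l : Qm s r l != 0 -> lam r = lam l.
Proof.
case: hX => _ _ hwt hne.
have hw := wtD s (hwt r).
have e0 : D s (u r) = \sum_j Qm s r j *: E s (u j).
  by rewrite hQ linS //; apply: eq_bigr => j _; rewrite linZ.
have e := @wt_proj _ (index_enum 'I_N) (fun j => Qm s r j *: E s (u j))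
   (fun j => lam j + s%:~R) (lam r + s%:~R) _
   (fun j => wtZ _ (wtE s (hwt j))) hw e0.
have e2 : \sum_(j | lam j + s%:~R != lam r + s%:~R) Qm s r j *: E s (u j) = 0.
  have h := e0; rewrite (bigID (fun j => lam j + s%:~R == lam r + s%:~R)) /= in h.
  apply: (addrI (\sum_(j | lam j + s%:~R == lam r + s%:~R) Qm s r j *: E s (u j))).
  by rewrite addr0 -h.
have e3 : \sum_j (if lam j + s%:~R != lam r + s%:~R then Qm s r j else 0) *: u j = 0.
  rewrite -[LHS](EKV s) linS //.
  rewrite (eq_bigr (fun j => if lam j + s%:~R != lam r + s%:~R then Qm s r j *: E s (u j) else 0)).
    by rewrite -big_mkcond e2 lin0.
  by move=> j _; case: ifP => _; rewrite linZ // ?scale0r.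
have := indepI e3 l; case: ifP => [_ h|]; first by move: hne; rewrite h eqxx.
by move/negbFE/eqP/addIr.
Qed.

Lemma Aindep (S : seq int) (c : int -> 'I_N -> CC) :
  uniq S -> F_comb E u S c = 0 -> forall m r, m \in S -> c m r = 0.
Proof.
case: hX => _ _ hwt hS h0 m r hm.
pose x := fun p : int * 'I_N => c p.1 p.2 *: E p.1 (u p.2).
have hsum : 0 = \sum_(p <- [seq (m', r') | m' <- S, r' <- index_enum 'I_N]) x p.
  by rewrite big_allpairs -[LHS]h0.
have := @wt_proj _ _ x (fun p => lam p.2 + p.1%:~R) (lam r + m%:~R) 0
  (fun p => wtZ _ (wtE p.1 (hwt p.2))) (wt0 _) hsum.
rewrite big_mkcond big_allpairs /= (bigD1_seq m) //= [X in _ + X]big1_seq ?addr0; last first.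
  move=> m' /andP [hm' _]; apply: big1 => r' _.
  case: ifP => // /eqP e.
  have e' : lam r' = lam r + (m - m')%:~R.
    by apply: (addIr (m'%:~R)); rewrite e intrB -addrA subrK.
  have [_ /eqP] := repsI e'; rewrite subr_eq0 => /eqP hmm.
  by move: hm'; rewrite hmm eqxx.
move=> e.
have e3 : \sum_j (if lam j == lam r then c m j else 0) *: u j = 0.
  rewrite -[LHS](EKV m) linS //.
  have -> : \sum_i E m ((if lam i == lam r then c m i else 0) *: u i) = 0.
    rewrite [RHS]e; apply: eq_bigr => j _; rewrite (inj_eq (addIr _)).
    by case: ifP => _; rewrite linZ // ?scale0r.
  by rewrite lin0.
by have := indepI e3 r; rewrite eqxx.
Qed.

End Final.
Theorem poly_mod : polynomial_module E D.
Proof.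
have [X [hX hsp]] := main_basis.
have [q hq] : exists q : 'I_(size X) -> 'I_(size X) -> {poly CC},
    forall s r l, Qm hX hsp s r l = (q r l).[s%:~R].
  apply: (polyQ (lam := fun i => bl X i)).
  - by move=> m s; apply: Qcomm.
  - by move=> r l; apply: Q0.
  - by move=> s r l; apply: Qblk.
exists (size X), (fun i : 'I_(size X) => bv X i); split.
  split; first by move=> w; apply: Aspan_Fcomb.
  by move=> S c hS h0 m r hm; apply: (Aindep hX hS h0 r hm).
exists (fun r l => map_poly polyC (q r l) + ((r == l)%:R *: 'X)%:P).
move=> s m r; rewrite hJ3 (hQ hX hsp) hEE linS //.
rewrite /eval2.
under [RHS]eq_bigr => l _ do
  rewrite hornerD horner_map /= hornerC hornerD hornerC hornerZ hornerX -hq scalerDl.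
rewrite big_split /= addrC; congr (_ + _).
  rewrite (bigD1 r) //= eqxx mul1r big1 ?addr0 // => l hl.
  by rewrite eq_sym (negbTE hl) mul0r scale0r.
by apply: eq_bigr => l _; rewrite linZ.
Qed.
End PartB.

Theorem theorem1 (V : lmodType CC) (E D : int -> V -> V) :
  in_J1 E D -> polynomial_module E D.
Proof.
case=> [[hE hE0 hEE] [hDl hDD] hJ1 hJ2 hJ3].
exact: (poly_mod (hDl 0) hE hE0 hEE hDl hDD hJ3 hJ1 hJ2).
Qed.
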